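(* Let $m,n$ be positive integers, and let $k,s$ be positive integers with $k<n$ and $s<m+n-k-1$. Then $$\sum_{t=s+1}^{m+n-k-1}(t-n+k+1)(t+2)(t+3)\cdots(t+k)\binom{\frac{mn}{n-k}+n-k-t-2}{\frac{mk}{n-k}-1} =\frac{m}{m+n-k}(s+2)(s+3)\cdots(s+k+1)\binom{\frac{mn}{n-k}+n-k-s-2}{\frac{mk}{n-k}}.$$
   Context: Binomial coefficients are generalized binomial coefficients: for real $a,b$, $\binom{a}{b}=\frac{\Gamma(a+1)}{\Gamma(b+1)\Gamma(a-b+1)}$, where $\Gamma$ is the Gamma function; in particular, if $b$ is a positive integer then $\binom{a}{b}=\frac{a(a-1)\cdots(a-b+1)}{b!}$. The product $(t+2)(t+3)\cdots(t+k)$ is the product of $t+j$ over $j=2,\ldots,k$ (empty product equal to $1$ when $k=1$). *)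

(* Defs.v *)
From Stdlib Require Import Reals.
From Coquelicot Require Import Coquelicot.
Open Scope R_scope.

(* Euler's Gamma function, Gamma z = int_0^oo x^(z-1) e^(-x) dx
   (the integral converges for z > 0, the only case used below). *)
Definition Gamma (z : R) : R :=
  RInt_gen (fun x => Rpower x (z - 1) * exp (- x))
           (at_right 0) (Rbar_locally p_infty).

Definition gbinom (a b : R) : R :=
  Gamma (a + 1) / (Gamma (b + 1) * Gamma (a - b + 1)).

Fixpoint shifted_prod (x : R) (k : nat) : R :=
  match k with
  | O => 1
  | S O => 1
  | S k' => shifted_prod x k' * (x + INR (S k'))
  end.

(* Main.v *)
Require Import Defs.
From Stdlib Require Import Reals Lra Lia.
From Coquelicot Require Import Coquelicot.
Open Scope R_scope.

Definition gf (z x : R) := Rpower x (z - 1) * exp (- x).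

Lemma gf_cont z x : 0 < x -> continuous (gf z) x.
Proof.
  intros Hx. apply (@ex_derive_continuous R_AbsRing R_NormedModule). unfold gf, Rpower.
  auto_derive. lra.
Qed.

Lemma gf_ex z a b : 0 < a -> 0 < b -> ex_RInt (gf z) a b.
Proof.
  intros Ha Hb. apply (@ex_RInt_continuous R_CompleteNormedModule). intros x Hx. apply gf_cont.
  assert (0 < Rmin a b) by (apply Rmin_glb_lt; lra). lra.
Qed.

Lemma gf_pos z x : 0 <= gf z x.
Proof. unfold gf, Rpower. apply Rmult_le_pos; apply Rlt_le, exp_pos. Qed.

Lemma ibp z a b : 0 < a -> 0 < b ->
  RInt (gf (z+1)) a b = (Rpower a z * exp (-a) - Rpower b z * exp (-b)) + z * RInt (gf z) a b.
Proof.
  intros Ha Hb.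
  assert (Hm : 0 < Rmin a b) by (apply Rmin_glb_lt; lra).
  assert (H : is_RInt (fun x => gf (z+1) x - z * gf z x) a b
     ((fun x => - (Rpower x z * exp (-x))) b - (fun x => - (Rpower x z * exp (-x))) a)).
  { apply (@is_RInt_derive R_CompleteNormedModule (fun x => - (Rpower x z * exp (-x)))).
    - intros x Hx. unfold gf, Rpower. auto_derive. lra.
      replace (z + 1 - 1) with z by ring.
      replace (exp (z * ln x)) with (exp ((z-1) * ln x) * x).
      field. lra.
      replace (z * ln x) with ((z-1) * ln x + ln x) by ring. rewrite exp_plus, exp_ln; lra.
    - intros x Hx. apply (continuous_minus (fun x => gf (z+1) x) (fun x => z * gf z x)).
      apply gf_cont; lra. apply (continuous_scal_r z (gf z)). apply gf_cont; lra. }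
  apply (@is_RInt_unique R_CompleteNormedModule) in H.

  assert (E : RInt (fun x => gf (z+1) x - z * gf z x) a b = RInt (gf (z+1)) a b - z * RInt (gf z) a b).
  { rewrite <- (RInt_scal (V:=R_CompleteNormedModule) (gf z)) by (apply gf_ex; lra).

    apply (RInt_minus (V:=R_CompleteNormedModule) (gf (z+1)) (fun x => scal z (gf z x))).
    apply gf_ex; lra. apply (ex_RInt_scal (V:=R_CompleteNormedModule)). apply gf_ex; lra. }

  rewrite E in H. lra.
Qed.

Lemma exp_ge1 u : 1 + u <= exp u.
Proof. destruct (Req_dec u 0) as [->|H]. rewrite exp_0; lra. apply Rlt_le, exp_ineq1, H. Qed.

Lemma ln_bound p x : 0 < p -> 0 < x -> p * ln x <= x + (p * ln p - p).
Proof.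
  intros Hp Hx. pose proof (exp_ge1 (ln (x / p))) as H.
  rewrite exp_ln in H by (apply Rdiv_lt_0_compat; lra).
  unfold Rdiv in H. rewrite ln_mult, ln_Rinv in H by (try apply Rinv_0_lt_compat; lra).
  apply Rmult_le_compat_l with (r := p) in H; [|lra].
  replace (p * (x * / p)) with x in H by (field; lra). nra.
Qed.

Definition KK z := exp ((z+1) * ln (z+1) - (z+1)).

Lemma KK_pos z : 0 < KK z.
Proof. apply exp_pos. Qed.

Lemma pow_exp_bound z x : 0 < z -> 1 <= x -> Rpower x z * exp (-x) <= KK z / x.
Proof.
  intros Hz Hx. unfold Rpower, KK.
  assert (H := ln_bound (z+1) x ltac:(lra) ltac:(lra)).
  assert (E : exp (z * ln x) = exp ((z+1) * ln x) / x).
  { replace ((z+1) * ln x) with (z * ln x + ln x) by ring. rewrite exp_plus, exp_ln by lra. field; lra. }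
  rewrite E. apply Rmult_le_reg_r with x; [lra|].
  replace (exp ((z + 1) * ln x) / x * exp (- x) * x) with (exp ((z + 1) * ln x) * exp (- x)) by (field; lra).
  replace (exp ((z + 1) * ln (z + 1) - (z + 1)) / x * x) with (exp (x + ((z + 1) * ln (z + 1) - (z + 1))) * exp (-x)).
  2:{ rewrite exp_plus. replace (exp x * exp ((z + 1) * ln (z + 1) - (z + 1)) * exp (- x))
       with (exp ((z + 1) * ln (z + 1) - (z + 1)) * (exp x * exp (-x))) by ring.
      rewrite <- exp_plus. replace (x + - x) with 0 by ring. rewrite exp_0. field; lra. }
  apply Rmult_le_compat_r. apply Rlt_le, exp_pos.
  destruct (Rle_lt_or_eq_dec _ _ H) as [H1|H1]. apply Rlt_le, exp_increasing, H1. rewrite H1; lra.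
Qed.

Lemma gf_bound_inf z x : 0 < z -> 1 <= x -> gf z x <= KK z / (x * x).
Proof.
  intros Hz Hx. unfold gf.
  assert (E : Rpower x (z - 1) = Rpower x z / x).
  { unfold Rpower. replace (z * ln x) with ((z-1) * ln x + ln x) by ring. rewrite exp_plus, exp_ln by lra. field; lra. }
  rewrite E. pose proof (pow_exp_bound z x Hz Hx).
  apply Rmult_le_reg_r with x; [lra|].
  replace (Rpower x z / x * exp (- x) * x) with (Rpower x z * exp (- x)) by (field; lra).
  replace (KK z / (x * x) * x) with (KK z / x) by (field; lra). exact H.
Qed.

Lemma gf_bound_0 z x : 0 < x -> gf z x <= Rpower x (z - 1).
Proof.
  intros Hx. unfold gf. rewrite <- (Rmult_1_r (Rpower x (z-1))) at 2.
  apply Rmult_le_compat_l. unfold Rpower; apply Rlt_le, exp_pos.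
  rewrite <- exp_0. apply exp_le_3 || (left; apply exp_increasing; lra).
Qed.

Lemma gf_mono z a' a b b' : 0 < a' -> a' <= a -> a <= b -> b <= b' ->
  RInt (gf z) a b <= RInt (gf z) a' b'.
Proof.
  intros H0 H1 H2 H3.
  rewrite <- (RInt_Chasles (V:=R_CompleteNormedModule) (gf z) a' a b') by (apply gf_ex; lra).
  rewrite <- (RInt_Chasles (V:=R_CompleteNormedModule) (gf z) a b b') by (apply gf_ex; lra).
  unfold plus; simpl.
  assert (0 <= RInt (gf z) a' a) by (apply RInt_ge_0; [lra|apply gf_ex; lra|intros; apply gf_pos]).
  assert (0 <= RInt (gf z) b b') by (apply RInt_ge_0; [lra|apply gf_ex; lra|intros; apply gf_pos]).
  lra.
Qed.

Lemma int_left z a : 0 < z -> 0 < a -> a <= 1 -> RInt (gf z) a 1 <= 1 / z.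
Proof.
  intros Hz Ha Ha1.
  assert (Hc : forall x, 0 < x -> continuous (fun x => Rpower x (z-1)) x).
  { intros x Hx. apply (@ex_derive_continuous R_AbsRing R_NormedModule). unfold Rpower. auto_derive. lra. }
  assert (H : is_RInt (fun x => Rpower x (z-1)) a 1 ((fun x => Rpower x z / z) 1 - (fun x => Rpower x z / z) a)).
  { apply (@is_RInt_derive R_CompleteNormedModule (fun x => Rpower x z / z)).
    - intros x Hx. assert (0 < x) by (pose proof (Rmin_glb_lt a 1 0); assert (0 < Rmin a 1) by (apply Rmin_glb_lt; lra); lra).
      unfold Rpower. auto_derive. lra.
      replace (exp (z * ln x)) with (exp ((z-1) * ln x) * x). field. split; lra.
      replace (z * ln x) with ((z-1) * ln x + ln x) by ring. rewrite exp_plus, exp_ln; lra.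
    - intros x Hx. apply Hc. assert (0 < Rmin a 1) by (apply Rmin_glb_lt; lra); lra. }
  apply (@is_RInt_unique R_CompleteNormedModule) in H.
  apply Rle_trans with (RInt (fun x => Rpower x (z-1)) a 1).
  apply RInt_le; [lra|apply gf_ex; lra| |].
  apply (@ex_RInt_continuous R_CompleteNormedModule). intros x Hx. apply Hc.
  assert (0 < Rmin a 1) by (apply Rmin_glb_lt; lra); lra.
  intros x Hx. apply gf_bound_0; lra.
  rewrite H. simpl. unfold Rpower. rewrite ln_1, Rmult_0_r, exp_0.
  assert (0 < exp (z * ln a)) by apply exp_pos.
  apply Rmult_le_reg_r with z; [lra|]. field_simplify; lra.
Qed.

Lemma int_right z b : 0 < z -> 1 <= b -> RInt (gf z) 1 b <= KK z.
Proof.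
  intros Hz Hb.
  assert (Hc : forall x, 0 < x -> continuous (fun x => KK z / (x * x)) x).
  { intros x Hx. apply (@ex_derive_continuous R_AbsRing R_NormedModule). auto_derive. nra. }
  assert (H : is_RInt (fun x => KK z / (x * x)) 1 b ((fun x => - KK z / x) b - (fun x => - KK z / x) 1)).
  { apply (@is_RInt_derive R_CompleteNormedModule (fun x => - KK z / x)).
    - intros x Hx. assert (0 < x) by (assert (Rmin 1 b = 1) by (apply Rmin_left; lra); lra).
      auto_derive. lra. field. lra.
    - intros x Hx. apply Hc. assert (Rmin 1 b = 1) by (apply Rmin_left; lra); lra. }
  apply (@is_RInt_unique R_CompleteNormedModule) in H.
  apply Rle_trans with (RInt (fun x => KK z / (x * x)) 1 b).
  apply RInt_le; [lra|apply gf_ex; lra| |].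
  apply (@ex_RInt_continuous R_CompleteNormedModule). intros x Hx. apply Hc.
  assert (Rmin 1 b = 1) by (apply Rmin_left; lra); lra.
  intros x Hx. apply gf_bound_inf; lra.
  rewrite H. simpl. pose proof (KK_pos z).
  assert (0 < KK z / b) by (apply Rdiv_lt_0_compat; lra).
  replace (- KK z / b - - KK z / 1) with (KK z - KK z / b) by (field; lra). lra.
Qed.

Definition aseq (n : nat) := exp (- (INR n + 1)).
Definition bseq (n : nat) := INR n + 1.
Definition cseq z n := RInt (gf z) (aseq n) (bseq n).

Lemma aseq_pos n : 0 < aseq n.
Proof. apply exp_pos. Qed.
Lemma aseq_le1 n : aseq n <= 1.
Proof. unfold aseq. pose proof (pos_INR n).
  assert (H0 : exp (-(INR n+1)) < exp 0) by (apply exp_increasing; lra). rewrite exp_0 in H0; lra. Qed.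
Lemma bseq_ge1 n : 1 <= bseq n.
Proof. unfold bseq. pose proof (pos_INR n). lra. Qed.
Lemma aseq_decr n m : (n <= m)%nat -> aseq m <= aseq n.
Proof. intros H. unfold aseq. apply le_INR in H. destruct (Rle_lt_or_eq_dec _ _ H) as [H1|H1].
  left; apply exp_increasing; lra. rewrite H1; lra. Qed.
Lemma bseq_incr n m : (n <= m)%nat -> bseq n <= bseq m.
Proof. intros H. unfold bseq. apply le_INR in H. lra. Qed.

Lemma cseq_incr z n : cseq z n <= cseq z (S n).
Proof.
  unfold cseq. apply gf_mono. apply aseq_pos. apply aseq_decr; lia.
  pose proof (aseq_le1 n); pose proof (bseq_ge1 n); lra. apply bseq_incr; lia.
Qed.

Lemma cseq_bound z n : 0 < z -> cseq z n <= 1 / z + KK z.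
Proof.
  intros Hz. unfold cseq.
  rewrite <- (RInt_Chasles (V:=R_CompleteNormedModule) (gf z) (aseq n) 1 (bseq n))
    by (pose proof (bseq_ge1 n); pose proof (aseq_pos n); apply gf_ex; lra).
  unfold plus; simpl.
  pose proof (int_left z (aseq n) Hz (aseq_pos n) (aseq_le1 n)).
  pose proof (int_right z (bseq n) Hz (bseq_ge1 n)). lra.
Qed.

Definition LL z := real (Lim_seq (cseq z)).

Lemma LL_lim z : 0 < z -> is_lim_seq (cseq z) (LL z).
Proof.
  intros Hz. unfold LL.
  assert (H : ex_finite_lim_seq (cseq z)).
  { apply (ex_finite_lim_seq_incr _ (1 / z + KK z)). apply cseq_incr. intros; apply cseq_bound, Hz. }
  pose proof (Lim_seq_correct' _ H).
  destruct H as [l Hl]. rewrite (is_lim_seq_unique _ _ Hl) in *. simpl. exact Hl.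
Qed.

Lemma LL_gen z : 0 < z -> is_RInt_gen (gf z) (at_right 0) (Rbar_locally p_infty) (LL z).
Proof.
  intros Hz. pose proof (LL_lim z Hz) as Hl.
  assert (Hup := is_lim_seq_incr_compare _ _ Hl (cseq_incr z)).
  intros P [eps HP]. simpl in HP.
  apply is_lim_seq_spec in Hl. destruct (Hl eps) as [N HN].
  apply Filter_prod with (Q := fun a => 0 < a < aseq N) (R := fun b => bseq N < b).
  - exists (mkposreal _ (aseq_pos N)). intros y Hy Hy0. simpl in Hy.
    unfold ball in Hy; simpl in Hy; unfold AbsRing_ball, abs, minus, plus, opp in Hy; simpl in Hy.
    split; [exact Hy0|]. rewrite Ropp_0, Rplus_0_r in Hy. apply Rabs_def2 in Hy. lra.
  - exists (bseq N). tauto.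
  - intros a b [Ha0 Ha] Hb. simpl.
    destruct (INR_unbounded (Rmax (- ln a) b)) as [n0 Hn0].
    set (n := Nat.max N n0).
    assert (HNn : (N <= n)%nat) by lia.
    assert (Hn0n : INR n0 <= INR n) by (apply le_INR; lia).
    assert (Han : aseq n <= a).
    { unfold aseq. rewrite <- (exp_ln a Ha0) at 1. assert (- ln a <= Rmax (- ln a) b) by apply Rmax_l.
      destruct (Rle_lt_or_eq_dec (- (INR n + 1)) (ln a)) as [H1|H1]. lra. left; apply exp_increasing; lra.
      rewrite H1; lra. }
    assert (Hbn : b <= bseq n).
    { unfold bseq. assert (b <= Rmax (- ln a) b) by apply Rmax_r. lra. }
    pose proof (aseq_le1 N). pose proof (bseq_ge1 N).
    exists (RInt (gf z) a b). split.
    + apply (@RInt_correct R_CompleteNormedModule). apply gf_ex; lra.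
    + apply HP. unfold ball; simpl; unfold AbsRing_ball, abs, minus, plus, opp; simpl.
      assert (H1 : cseq z N <= RInt (gf z) a b) by (apply gf_mono; try apply aseq_pos; lra).
      assert (H2 : RInt (gf z) a b <= cseq z n) by (pose proof (aseq_pos n); apply gf_mono; lra).
      pose proof (Hup n). specialize (HN N (le_n N)).
      apply Rabs_def2 in HN. apply Rabs_def1; lra.
Qed.

Lemma Gamma_LL z : 0 < z ->
  RInt_gen (fun x => Rpower x (z - 1) * exp (- x)) (at_right 0) (Rbar_locally p_infty) = LL z.
Proof.
  intros Hz. apply (@is_RInt_gen_unique R_CompleteNormedModule (at_right 0) (Rbar_locally p_infty)
     (Proper_StrongProper _ (at_right_proper_filter 0)) (Proper_StrongProper _ (Rbar_locally_filter p_infty))).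
  apply LL_gen, Hz.
Qed.

Lemma lim_0_bound (u : nat -> R) C : 0 <= C -> (forall n, 0 <= u n <= C / (INR n + 1)) -> is_lim_seq u 0.
Proof.
  intros HC Hu. apply is_lim_seq_spec. intros eps. simpl.
  destruct (INR_unbounded (C / eps)) as [N HN]. exists N. intros n Hn.
  apply le_INR in Hn. specialize (Hu n). rewrite Rminus_0_r, Rabs_pos_eq by lra.
  pose proof (pos_INR n). pose proof (cond_pos eps).
  apply Rle_lt_trans with (C / (INR n + 1)); [lra|].
  apply Rmult_lt_reg_r with (INR n + 1); [lra|].
  replace (C / (INR n + 1) * (INR n + 1)) with C by (field; lra).
  apply Rmult_lt_reg_r with (/ eps). apply Rinv_0_lt_compat; lra.
  replace (eps * (INR n + 1) * / eps) with (INR n + 1) by (field; lra). unfold Rdiv in HN. lra.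
Qed.

Lemma LL_rec z : 0 < z -> LL (z + 1) = z * LL z.
Proof.
  intros Hz.
  assert (H1 : is_lim_seq (fun n => Rpower (aseq n) z * exp (- aseq n)) 0).
  { apply (lim_0_bound _ (1 / z)). apply Rlt_le, Rdiv_lt_0_compat; lra.
    intros n. unfold Rpower. split. apply Rlt_le, Rmult_lt_0_compat; apply exp_pos.
    unfold aseq. rewrite ln_exp. pose proof (pos_INR n).
    assert (exp (- exp (- (INR n + 1))) <= 1).
    { assert (H0 : exp (- exp (- (INR n + 1))) < exp 0) by (apply exp_increasing; pose proof (exp_pos (- (INR n + 1))); lra).
      rewrite exp_0 in H0; lra. }
    assert (exp (z * - (INR n + 1)) <= 1 / z / (INR n + 1)).
    { pose proof (exp_ge1 (z * (INR n + 1))).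
      replace (z * - (INR n + 1)) with (- (z * (INR n + 1))) by ring. rewrite exp_Ropp.
      apply Rmult_le_reg_r with (exp (z * (INR n + 1))). apply exp_pos.
      rewrite Rinv_l by (apply Rgt_not_eq, exp_pos).
      apply Rmult_le_reg_l with (z * (INR n + 1)). nra.
      replace (z * (INR n + 1) * (1 / z / (INR n + 1) * exp (z * (INR n + 1)))) with (exp (z * (INR n + 1))) by (field; lra).
      nra. }
    pose proof (exp_pos (z * - (INR n + 1))). nra. }
  assert (H2 : is_lim_seq (fun n => Rpower (bseq n) z * exp (- bseq n)) 0).
  { apply (lim_0_bound _ (KK z)). apply Rlt_le, KK_pos.
    intros n. split. unfold Rpower. apply Rlt_le, Rmult_lt_0_compat; apply exp_pos.
    apply pow_exp_bound. exact Hz. apply bseq_ge1. }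
  assert (H3 := is_lim_seq_plus' _ _ _ _ (is_lim_seq_minus' _ _ _ _ H1 H2) (is_lim_seq_scal_l _ z _ (LL_lim z Hz))).
  assert (H4 : is_lim_seq (cseq (z + 1)) (0 - 0 + z * LL z)).
  { apply (is_lim_seq_ext _ _ _ (fun n => eq_sym (ibp z (aseq n) (bseq n) (aseq_pos n) ltac:(pose proof (bseq_ge1 n); lra)))).
    exact H3. }
  unfold LL at 1. rewrite (is_lim_seq_unique _ _ H4). simpl. ring.
Qed.

Lemma Gamma_rec z : 0 < z -> Gamma (z + 1) = z * Gamma z.
Proof.
  intros Hz. unfold Gamma.
  replace (z + 1 - 1) with (z + 1 - 1) by ring.
  rewrite (Gamma_LL (z+1)) by lra. rewrite (Gamma_LL z) by lra. apply LL_rec, Hz.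
Qed.

Lemma sp_succ x k : (1 <= k)%nat -> shifted_prod x (k+1) = shifted_prod x k * (x + INR k + 1).
Proof.
  intros Hk. destruct k as [|k']. lia. rewrite Nat.add_1_r.
  change (shifted_prod x (S (S k'))) with (shifted_prod x (S k') * (x + INR (S (S k')))).
  rewrite (S_INR (S k')). ring.
Qed.

Lemma sp_shift x k : (1 <= k)%nat -> shifted_prod x (k+1) = (x+2) * shifted_prod (x+1) k.
Proof.
  intros Hk. induction k as [|k IH]. lia.
  destruct k as [|k'].
  - simpl. ring.
  - rewrite sp_succ by lia.
    replace (S (S k')) with (S k' + 1)%nat by lia.
    rewrite IH by lia. rewrite (sp_succ (x+1)) by lia. rewrite !plus_INR. simpl. ring.
Qed.

Lemma gbinom_eq A B X Y Z : A + 1 = X -> B + 1 = Y -> A - B + 1 = Z ->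
  gbinom A B = Gamma X / (Gamma Y * Gamma Z).
Proof. intros <- <- <-. reflexivity. Qed.

Lemma step_lemma (m n : R) (k : nat) (x : R) :
  0 < m -> (1 <= k)%nat -> INR k < n -> 0 <= x -> x + 3 <= m + n - INR k ->
  (x + 1 - n + INR k + 1) * shifted_prod (x + 1) k *
    gbinom (m * n / (n - INR k) + n - INR k - (x + 1) - 2) (m * INR k / (n - INR k) - 1)
  + m / (m + n - INR k) * shifted_prod (x + 1) (k + 1) *
    gbinom (m * n / (n - INR k) + n - INR k - (x + 1) - 2) (m * INR k / (n - INR k))
  = m / (m + n - INR k) * shifted_prod x (k + 1) *
    gbinom (m * n / (n - INR k) + n - INR k - x - 2) (m * INR k / (n - INR k)).
Proof.
  intros Hm Hk Hkn Hx HM.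
  assert (Hk0 : 1 <= INR k) by (apply (le_INR 1); lia).
  set (kk := INR k) in *.
  assert (HN : 0 < n - kk) by lra.
  assert (Hb : 0 < m * kk / (n - kk)) by (apply Rdiv_lt_0_compat; nra).
  set (b := m * kk / (n - kk)) in *.
  set (h := m + (n - kk) - x - 2).
  set (g := b + h).
  assert (Hh : 1 <= h) by (unfold h; lra).
  assert (Ea : m * n / (n - kk) = b + m) by (unfold b; field; lra).
  rewrite (gbinom_eq _ _ g b (h + 1)) by (try rewrite Ea; unfold g, h; ring).
  rewrite (gbinom_eq _ _ g (b + 1) h) by (try rewrite Ea; unfold g, h; ring).
  rewrite (gbinom_eq _ _ (g + 1) (b + 1) (h + 1)) by (try rewrite Ea; unfold g, h; ring).
  rewrite !Gamma_rec by (unfold g; lra).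
  rewrite (sp_succ (x + 1)) by exact Hk. rewrite (sp_shift x) by exact Hk.
  set (S := shifted_prod (x + 1) k).
  set (Gg := Gamma g). set (Gh := Gamma h). set (Gb := Gamma b).
  destruct (Req_dec Gb 0) as [E|E].
  { unfold Rdiv. rewrite !Rinv_mult. rewrite E, Rinv_0. ring. }
  destruct (Req_dec Gh 0) as [E2|E2].
  { unfold Rdiv. rewrite !Rinv_mult. rewrite E2, Rinv_0. ring. }
  fold kk. clearbody S Gg Gh Gb. unfold g, h, b in *. clearbody kk.
  field. repeat split; lra.
Qed.

Lemma base_lemma (m n : R) (k : nat) (x : R) :
  0 < m -> (1 <= k)%nat -> INR k < n -> x + 2 = m + n - INR k ->
  (x + 1 - n + INR k + 1) * shifted_prod (x + 1) k *
    gbinom (m * n / (n - INR k) + n - INR k - (x + 1) - 2) (m * INR k / (n - INR k) - 1)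
  = m / (m + n - INR k) * shifted_prod x (k + 1) *
    gbinom (m * n / (n - INR k) + n - INR k - x - 2) (m * INR k / (n - INR k)).
Proof.
  intros Hm Hk Hkn HM.
  assert (Hk0 : 1 <= INR k) by (apply (le_INR 1); lia).
  set (kk := INR k) in *.
  assert (HN : 0 < n - kk) by lra.
  assert (Hb : 0 < m * kk / (n - kk)) by (apply Rdiv_lt_0_compat; nra).
  set (b := m * kk / (n - kk)) in *.
  assert (Ea : m * n / (n - kk) = b + m) by (unfold b; field; lra).
  rewrite (gbinom_eq _ _ b b 1) by (try rewrite Ea; lra).
  rewrite (gbinom_eq _ _ (b + 1) (b + 1) 1) by (try rewrite Ea; lra).
  rewrite !Gamma_rec by lra.
  rewrite (sp_shift x) by exact Hk.
  set (S := shifted_prod (x + 1) k).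
  set (G1 := Gamma 1). set (Gb := Gamma b).
  destruct (Req_dec Gb 0) as [E|E].
  { unfold Rdiv. rewrite !Rinv_mult. rewrite E, Rinv_0. ring. }
  clearbody S G1 Gb. unfold b in *. clearbody kk.
  destruct (Req_dec G1 0) as [E2|E2].
  { unfold Rdiv. rewrite !Rinv_mult. rewrite E2, Rinv_0. ring. }
  replace (x + 1 - n + kk + 1) with m by lra. replace (x + 2) with (m + n - kk) by lra.
  field. repeat split; try lra.
Qed.

Theorem lemma2p4 (m n k s : nat) :
  (0 < m)%nat -> (0 < n)%nat -> (0 < k)%nat -> (0 < s)%nat ->
  (k < n)%nat -> (s < m + n - k - 1)%nat ->
  sum_n_m (fun t : nat =>
      (INR t - INR n + INR k + 1) * shifted_prod (INR t) k *
      gbinom (INR m * INR n / (INR n - INR k) + INR n - INR k - INR t - 2)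
             (INR m * INR k / (INR n - INR k) - 1))
    (s + 1) (m + n - k - 1)
  = INR m / (INR m + INR n - INR k) * shifted_prod (INR s) (k + 1) *
    gbinom (INR m * INR n / (INR n - INR k) + INR n - INR k - INR s - 2)
           (INR m * INR k / (INR n - INR k)).
Proof.
  intros Hm Hn Hk Hs Hkn Hsm.
  assert (HmR : 0 < INR m) by (apply lt_0_INR; lia).
  assert (HknR : INR k < INR n) by (apply lt_INR; lia).
  assert (Hk1 : (1 <= k)%nat) by lia.
  set (F := fun t : nat =>
      (INR t - INR n + INR k + 1) * shifted_prod (INR t) k *
      gbinom (INR m * INR n / (INR n - INR k) + INR n - INR k - INR t - 2)
             (INR m * INR k / (INR n - INR k) - 1)).
  assert (Main : forall d s0, (s0 + d + 2 = m + n - k)%nat ->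
    sum_n_m F (s0 + 1) (m + n - k - 1) =
    INR m / (INR m + INR n - INR k) * shifted_prod (INR s0) (k + 1) *
    gbinom (INR m * INR n / (INR n - INR k) + INR n - INR k - INR s0 - 2)
           (INR m * INR k / (INR n - INR k))).
  { induction d as [|d IH]; intros s0 Hd.
    - replace (m + n - k - 1)%nat with (s0 + 1)%nat by lia. rewrite sum_n_n.
      unfold F. rewrite plus_INR. simpl (INR 1).
      apply base_lemma; try assumption.
      assert (E : INR (s0 + 0 + 2) = INR (m + n - k)) by (rewrite Hd; reflexivity).
      rewrite minus_INR in E by lia. rewrite !plus_INR in E. simpl in E. lra.
    - rewrite sum_Sn_m by lia.
      replace (S (s0 + 1)) with ((s0 + 1) + 1)%nat by lia.
      rewrite (IH (s0 + 1)%nat) by lia.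
      unfold F, plus; simpl. rewrite !plus_INR. simpl (INR 1).
      apply step_lemma; try assumption. apply pos_INR.
      assert (E : INR (s0 + S d + 2) = INR (m + n - k)) by (rewrite Hd; reflexivity).
      rewrite minus_INR in E by lia. rewrite !plus_INR in E. rewrite S_INR in E. simpl in E.
      pose proof (pos_INR d). lra. }
  apply (Main (m + n - k - 2 - s)%nat s). lia.
Qed.
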